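(* Let $n,d\ge1$, $a,p\ge 0$, $s>0$, $r>0$, $K\ge 1$ integer, and let $S^c\subset\mathbb Z^d$. Consider a Hamiltonian, independent of $y$, of the form $$Q(x,w)=\sum_{\nu\in\mathbb Z^n,\ |\nu|_1\le K}\ \sum_{\alpha,\beta:\ |\alpha|+|\beta|\ge 1}e^{i\nu\cdot x}Q_{\nu,\alpha,\beta}z^\alpha\bar z^\beta,$$ in the variables $x\in\mathbb T^n_{\mathbb C}$ and $w=(z,\bar z)=(z_k,\bar z_k)_{k\in S^c}$ (so $Q$ has degree at least one in $w$ and is a trigonometric polynomial of degree $\le K$ in $x$). Write its Hamiltonian vector field as $X_Q=X_Q^{(y)}+X_Q^{(w)}$ with $$X_Q^{(y)}=\partial_xQ(x,w)\cdot\partial_y,\qquad X_Q^{(w)}=-i\,\partial_zQ(x,w)\cdot\partial_{\bar z}+i\,\partial_{\bar z}Q(x,w)\cdot\partial_z .$$ Then $$\|X_Q^{(y)}\|_{s,r}\le K\,\|X_Q^{(w)}\|_{s,r}.$$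
   Context: $\ell^{(a,p)}$ denotes the space of sequences $u=(u_k)_{k\in S^c}$ with $\|u\|_{a,p}^2=|u_0|^2+\sum_{k}|u_k|^2e^{2a|k|}|k|^{2p}<\infty$ ($|k|$ the Euclidean norm); $|\cdot|_1$ on $\mathbb Z^n$ or $\mathbb C^n$ is the $\ell^1$ norm and $|\cdot|_\infty$ the max norm. $\mathbb T^n_s=\{x\in\mathbb C^n/2\pi\mathbb Z^n:\ |\mathrm{Im}\,x|\le s\}$ and $D(s,r)=\{(x,y,w):\ x\in\mathbb T^n_s,\ |y|_1\le r^2,\ \|w\|_{a,p}\le r\}$, with $w=(z,\bar z)\in\ell^{(a,p)}\times\ell^{(a,p)}$. On $V=\mathbb C^n\times\mathbb C^n\times\ell^{(a,p)}\times\ell^{(a,p)}$ put $\|(x,y,z,\bar z)\|_{V,s,r}=\frac{|x|_\infty}{s}+\frac{|y|_1}{r^2}+\frac{\|z\|_{a,p}}{r}+\frac{\|\bar z\|_{a,p}}{r}$. For a vector field with formal expansion $X=\sum_{\nu,i,\alpha,\beta}X^{(\mathtt v)}_{\nu,i,\alpha,\beta}e^{i\nu\cdot x}y^iz^\alpha\bar z^\beta\partial_{\mathtt v}$ ($\mathtt v=x,y,z,\bar z$), its majorant is $MX=\sum|X^{(\mathtt v)}_{\nu,i,\alpha,\beta}|e^{s|\nu|_1}y^iz^\alpha\bar z^\beta\partial_{\mathtt v}$ and its norm is $\|X\|_{s,r}=\sup_{(y,z,\bar z)\in D(s,r)}\|MX\|_{V,s,r}$. *)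

(* Defs.v *)
From HB Require Import structures.
From mathcomp Require Import all_boot all_order all_algebra.
From mathcomp Require Import all_classical all_reals all_analysis.
From mathcomp Require Import finmap.
From mathcomp Require Import complex.

Set Implicit Arguments.
Unset Strict Implicit.
Unset Printing Implicit Defensive.

Import Order.TTheory GRing.Theory Num.Theory.
Local Open Scope ring_scope.
Local Open Scope classical_set_scope.

Section Defs.
Variable R : realType.

Definition cmod (z : R[i]) : R := Num.sqrt (@complex.Re R z ^+ 2 + @complex.Im R z ^+ 2).

Definition euclid (d : nat) (k : 'rV[int]_d) : R :=
  Num.sqrt (\sum_(i < d) ((k ord0 i)%:~R : R) ^+ 2).

Definition l1norm (n : nat) (nu : 'rV[int]_n) : R :=
  \sum_(i < n) `|((nu ord0 i)%:~R : R)|.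

Definition weight (d : nat) (a p : R) (k : 'rV[int]_d) : R :=
  if k == 0 then 1 else expR (2 * a * euclid k) * (euclid k `^ (2 * p)).

Definition esqrt (x : \bar R) : \bar R :=
  match x with
  | r%:E => (Num.sqrt r)%:E
  | +oo%E => +oo%E
  | -oo%E => 0%E
  end.

Definition sqnorm (d : nat) (a p : R) (Sc : set 'rV[int]_d)
    (u : 'rV[int]_d -> R[i]) : \bar R :=
  (\esum_(k in Sc) ((weight a p k) * cmod (u k) ^+ 2)%:E)%E.

Definition ellnorm (d : nat) (a p : R) (Sc : set 'rV[int]_d)
    (A : 'rV[int]_d -> \bar R) : \bar R :=
  esqrt (\esum_(k in Sc) ((weight a p k)%:E * (A k * A k)))%E.

(* multi-indices alpha : S^c -> N with finite support *)
Definition mindex (d : nat) := {fsfun 'rV[int]_d -> nat with 0%N}.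

Definition mdeg (d : nat) (al : mindex d) : nat := \sum_(k <- finsupp al) al k.

Definition supp_in (d : nat) (Sc : set 'rV[int]_d) (al : mindex d) : Prop :=
  forall k, k \in finsupp al -> Sc k.

Definition monabs (d : nat) (al : mindex d) (z : 'rV[int]_d -> R[i]) : R :=
  \prod_(k <- finsupp al) cmod (z k) ^+ al k.

(* |d/dz_k (z^alpha)| = alpha_k |z^(alpha - e_k)| *)
Definition dmonabs (d : nat) (k : 'rV[int]_d) (al : mindex d)
    (z : 'rV[int]_d -> R[i]) : R :=
  (al k)%:R * \prod_(j <- finsupp al)
                 cmod (z j) ^+ (if j == k then (al k).-1 else al j).

Definition Qidx (n d K : nat) (Sc : set 'rV[int]_d) :
    set ('rV[int]_n * mindex d * mindex d) :=
  [set t | l1norm t.1.1 <= K%:R /\ (1 <= mdeg t.1.2 + mdeg t.2)%N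
           /\ supp_in Sc t.1.2 /\ supp_in Sc t.2].

Definition coefM (n d : nat) (s : R)
    (Q : 'rV[int]_n -> mindex d -> mindex d -> R[i])
    (t : 'rV[int]_n * mindex d * mindex d) : R :=
  cmod (Q t.1.1 t.1.2 t.2) * expR (s * l1norm t.1.1).

Definition Vnorm (s r : R) (xinf y1 zn zbn : \bar R) : \bar R :=
  (xinf * (s^-1)%:E + y1 * (r ^- 2)%:E + zn * (r^-1)%:E + zbn * (r^-1)%:E)%E.

(* the domain D(s,r); w = (z, zbar) with ||w||^2 = ||z||^2 + ||zbar||^2 *)
Definition Dsr (n d : nat) (a p s r : R) (Sc : set 'rV[int]_d) :
    set ((('I_n -> R[i]) * ('I_n -> R[i])) *
         (('rV[int]_d -> R[i]) * ('rV[int]_d -> R[i]))) :=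
  [set P | (forall j, `|@complex.Im R (P.1.1 j)| <= s)
           /\ \sum_(j < n) cmod (P.1.2 j) <= r ^+ 2
           /\ (esqrt (sqnorm a p Sc P.2.1 + sqnorm a p Sc P.2.2) <= r%:E)%E].

(* majorant components of X_Q^(y) = d_x Q . d_y, at the point (z, zbar):
   coefficient of d_{y_j} is sum |i nu_j Q| e^{s|nu|_1} z^alpha zbar^beta *)
Definition XyM (n d K : nat) (s : R) (Sc : set 'rV[int]_d)
    (Q : 'rV[int]_n -> mindex d -> mindex d -> R[i])
    (z zb : 'rV[int]_d -> R[i]) (j : 'I_n) : \bar R :=
  (\esum_(t in @Qidx n d K Sc)
     (`|((t.1.1 ord0 j)%:~R : R)| * coefM s Q t
       * monabs t.1.2 z * monabs t.2 zb)%:E)%E.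

(* majorant of the d_z component  i d_{zbar_k} Q *)
Definition XzM (n d K : nat) (s : R) (Sc : set 'rV[int]_d)
    (Q : 'rV[int]_n -> mindex d -> mindex d -> R[i])
    (z zb : 'rV[int]_d -> R[i]) (k : 'rV[int]_d) : \bar R :=
  (\esum_(t in @Qidx n d K Sc)
     (coefM s Q t * monabs t.1.2 z * dmonabs k t.2 zb)%:E)%E.

(* majorant of the d_zbar component  -i d_{z_k} Q *)
Definition XzbM (n d K : nat) (s : R) (Sc : set 'rV[int]_d)
    (Q : 'rV[int]_n -> mindex d -> mindex d -> R[i])
    (z zb : 'rV[int]_d -> R[i]) (k : 'rV[int]_d) : \bar R :=
  (\esum_(t in @Qidx n d K Sc)
     (coefM s Q t * dmonabs k t.1.2 z * monabs t.2 zb)%:E)%E.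

Definition norm_Xy (n d K : nat) (a p s r : R) (Sc : set 'rV[int]_d)
    (Q : 'rV[int]_n -> mindex d -> mindex d -> R[i]) : \bar R :=
  ereal_sup [set Vnorm s r 0%E (\sum_(j < n) @XyM n d K s Sc Q P.2.1 P.2.2 j)%E 0%E 0%E
            | P in @Dsr n d a p s r Sc].

Definition norm_Xw (n d K : nat) (a p s r : R) (Sc : set 'rV[int]_d)
    (Q : 'rV[int]_n -> mindex d -> mindex d -> R[i]) : \bar R :=
  ereal_sup [set Vnorm s r 0%E 0%E
                   (@ellnorm d a p Sc (@XzM n d K s Sc Q P.2.1 P.2.2))
                   (@ellnorm d a p Sc (@XzbM n d K s Sc Q P.2.1 P.2.2))
            | P in @Dsr n d a p s r Sc].

End Defs.

(* Main.v *)
Require Import Defs.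
From HB Require Import structures.
From mathcomp Require Import all_boot all_order all_algebra.
From mathcomp Require Import all_classical all_reals all_analysis.
From mathcomp Require Import finmap.
From mathcomp Require Import complex.
From mathcomp Require Import zify ring lra.
Import Order.TTheory GRing.Theory Num.Theory.
Local Open Scope ring_scope.
Local Open Scope classical_set_scope.

Lemma weight_ge1 (R : realType) (d : nat) (a p : R) (k : 'rV[int]_d) :
  0 <= a -> 0 <= p -> 1 <= weight a p k.
Proof.
move=> ha hp; rewrite /weight; case: eqP => // /eqP k0.
have [i hi] : exists i, k ord0 i != 0.
  case: (pickP (fun i => k ord0 i != 0)) => [i hi|h]; first by exists i.
  exfalso; move/eqP: k0; apply; apply/rowP => i.
  by move: (h i) => /negbFE/eqP ->; rewrite mxE.
have e1 : 1 <= @euclid R _ k.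
  rewrite /euclid -[X in X <= _]sqrtr1 ler_sqrt; last by apply: sumr_ge0 => j _; exact: sqr_ge0.
  rewrite (bigD1 i) //= -[X in X <= _]addr0; apply: lerD; last by apply: sumr_ge0 => j _; exact: sqr_ge0.
  rewrite expr2 -intrM ler1z.
  move: hi; set x := k ord0 i => hx.
  have : (x <= -1) || (1 <= x) by lia.
  by case/orP => h; nia.
apply: mulr_ege1.
  apply: le_trans (expR_ge1Dx _); rewrite lerDl; apply: mulr_ge0; last lra.
  by apply: mulr_ge0.
apply: (@le_trans _ _ (@euclid R _ k `^ 0)); first by rewrite powRr0.
apply: ler_powR => //; apply: mulr_ge0 => //.
Qed.

Lemma cmod_ge0 (R : realType) (z : R[i]) : 0 <= cmod z.
Proof. exact: sqrtr_ge0. Qed.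

Lemma monabs_ge0 (R : realType) d (al : mindex d) (z : 'rV[int]_d -> R[i]) :
  0 <= monabs al z.
Proof. by apply: prodr_ge0 => j _; apply: exprn_ge0; exact: cmod_ge0. Qed.

Lemma dmonabs_ge0 (R : realType) d k (al : mindex d) (z : 'rV[int]_d -> R[i]) :
  0 <= dmonabs k al z.
Proof.
apply: mulr_ge0 => //; by apply: prodr_ge0 => j _; apply: exprn_ge0; exact: cmod_ge0.
Qed.

Lemma coefM_ge0 (R : realType) n d (s : R) (Q : 'rV[int]_n -> mindex d -> mindex d -> R[i]) (t : 'rV[int]_n * mindex d * mindex d) :
  0 <= Defs.coefM s Q t.
Proof. by apply: mulr_ge0; [exact: cmod_ge0| exact: expR_ge0]. Qed.

Lemma dsum (R : realType) (I : Type) (s : seq I) (f g : I -> R) :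
  \sum_(i <- s) \sum_(j <- s) f i * g j = (\sum_(i <- s) f i) * (\sum_(j <- s) g j).
Proof. by rewrite mulr_suml; apply: eq_bigr => i _; rewrite mulr_sumr. Qed.

Lemma cs_real (R : realType) (I : Type) (s : seq I) (f g : I -> R) :
  \sum_(i <- s) f i * g i <=
  Num.sqrt (\sum_(i <- s) f i ^+ 2) * Num.sqrt (\sum_(i <- s) g i ^+ 2).
Proof.
set T := \sum_(i <- s) f i * g i.
set F := \sum_(i <- s) f i ^+ 2; set G := \sum_(i <- s) g i ^+ 2.
have F0 : 0 <= F by apply: sumr_ge0 => i _; exact: sqr_ge0.
have G0 : 0 <= G by apply: sumr_ge0 => i _; exact: sqr_ge0.
have H : 0 <= \sum_(i <- s) \sum_(j <- s) (f i * g j - f j * g i) ^+ 2.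
  by apply: sumr_ge0 => i _; apply: sumr_ge0 => j _; exact: sqr_ge0.
have E : \sum_(i <- s) \sum_(j <- s) (f i * g j - f j * g i) ^+ 2 =
   \sum_(i <- s) \sum_(j <- s) (f i ^+ 2 * g j ^+ 2)
 + \sum_(i <- s) \sum_(j <- s) (g i ^+ 2 * f j ^+ 2)
 - \sum_(i <- s) \sum_(j <- s) ((f i * g i * 2) * (f j * g j)).
  rewrite -!big_split /= -sumrB; apply: eq_bigr => i _.
  rewrite -!big_split /= -sumrB; apply: eq_bigr => j _; ring.
rewrite E !dsum -/F -/G -/T in H.
have : T ^+ 2 <= F * G.
  rewrite -mulr_suml -/T in H. nra.
move=> h; apply: le_trans (ler_norm T) _.
rewrite -sqrtr_sqr -sqrtrM // ler_sqrt //; exact: mulr_ge0.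
Qed.

Lemma euler (R : realType) d (al : mindex d) (z : 'rV[int]_d -> R[i])
    (U : {fset 'rV[int]_d}) :
  (finsupp al `<=` U)%fset ->
  \sum_(k <- U) cmod (z k) * dmonabs k al z = (mdeg al)%:R * monabs al z.
Proof.
move=> sub; rewrite -(big_fset_incl _ sub); last first.
  move=> k _ kn; rewrite /dmonabs; move: kn; rewrite mem_finsupp negbK => /eqP ->.
  by rewrite mul0r mulr0.
rewrite /mdeg natr_sum mulr_suml big_seq [RHS]big_seq; apply: eq_bigr => k kin.
rewrite /dmonabs /monabs (bigD1_seq k) //= [in RHS](bigD1_seq k) //= eqxx.
have hk : (0 < al k)%N by move: kin; rewrite mem_finsupp => /eqP; lia.
rewrite -[X in _ = _ * (_ ^+ X * _)](prednK hk) exprS.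
under eq_bigr => j /negPf -> do [].
by rewrite mulrCA !mulrA.
Qed.

Lemma esqrt_le (R : realType) (x : \bar R) (r : R) :
  (0 <= x)%E -> 0 <= r -> (esqrt x <= r%:E)%E -> (x <= (r ^+ 2)%:E)%E.
Proof.
case: x => [x| |] //= x0 r0; rewrite ?lee_fin // => h.
have := sqr_sqrtr x0; have := sqrtr_ge0 x; nra.
Qed.

Lemma cs_ext (R : realType) d (a p r : R) (Sc : set 'rV[int]_d)
  (U : {fset 'rV[int]_d}) (c : 'rV[int]_d -> R) (A : 'rV[int]_d -> \bar R) :
  0 <= a -> 0 <= p -> 0 < r -> (forall k, k \in U -> Sc k) ->
  (forall k, 0 <= c k) -> (forall k, (0 <= A k)%E) ->
  (\esum_(k in Sc) (weight a p k * c k ^+ 2)%:E <= (r ^+ 2)%:E)%E ->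
  (\sum_(k <- U) (c k)%:E * A k <= r%:E * ellnorm a p Sc A)%E.
Proof.
move=> ha hp hr USc c0 A0 hc.
have w1 k : 1 <= weight a p k := @weight_ge1 R d a p k ha hp.
have w0 k : 0 < weight a p k := lt_le_trans ltr01 (w1 k).
have UX : fsets Sc [set` U] by split; [exact: finite_fset | move=> k /= /USc].
rewrite /ellnorm.
set N := esum _ _.
have N0 : (0 <= N)%E.
  apply: esum_ge0 => k _; apply: mule_ge0; [by rewrite lee_fin ltW | exact: mule_ge0].
have NU : (\sum_(k <- U) (weight a p k)%:E * (A k * A k) <= N)%E.
  apply: esum_ge; exists [set` U] => //.
  by rewrite fsbig_finite ?set_fsetK //; exact: finite_fset.
have Nk : forall k, k \in U -> ((weight a p k)%:E * (A k * A k) <= N)%E.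
  move=> k kU; apply: esum_ge; exists [set k]; last by rewrite fsbig_set1.
  by split; [exact: finite_set1 | by move=> x /= ->; apply: USc].
have cU : (\sum_(k <- U) (weight a p k * c k ^+ 2)%:E <= (r^+2)%:E)%E.
  apply: le_trans hc; apply: esum_ge; exists [set` U] => //.
  by rewrite fsbig_finite ?set_fsetK //; exact: finite_fset.
move: N N0 NU Nk => [n| |] N0 NU Nk /=.
- have Af k : k \in U -> A k = (fine (A k))%:E.
    move=> kU; have := Nk k kU; have := A0 k; case: (A k) => [x| |] //= _.
    by rewrite mulyy gt0_muley ?lte_fin.
  rewrite big_seq (eq_bigr (fun k => ((c k * fine (A k))%:E))); last first.
    by move=> k kU; rewrite (Af k kU).
  rewrite -big_seq sumEFin -EFinM lee_fin.
  rewrite big_seq (eq_bigr (fun k => (weight a p k * fine (A k) ^+ 2)%:E)) in NU; last first.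
    by move=> k kU; rewrite (Af k kU) -!EFinM expr2.
  rewrite -big_seq sumEFin lee_fin in NU.
  rewrite sumEFin lee_fin in cU.
  have n0 : 0 <= n by rewrite -lee_fin.
  apply: le_trans (@cs_real R _ U c (fun k => fine (A k))) _.
  apply: ler_pM; [exact: sqrtr_ge0 | exact: sqrtr_ge0 | |].
    rewrite -(ger0_norm (ltW hr)) -sqrtr_sqr ler_sqrt; last exact: sqr_ge0.
    apply: le_trans cU; apply: ler_sum => k _; apply: ler_peMl => //; exact: sqr_ge0.
  rewrite ler_sqrt //; apply: le_trans NU; apply: ler_sum => k _.
  apply: ler_peMl => //; exact: sqr_ge0.
- by rewrite gt0_muley ?lte_fin // leey.
- by [].
Qed.

Lemma pointwise (R : realType) n d K (a p s r : R) (Sc : set 'rV[int]_d)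
  (Q : 'rV[int]_n -> mindex d -> mindex d -> R[i]) (z zb : 'rV[int]_d -> R[i]) :
  0 <= a -> 0 <= p -> 0 < r ->
  (sqnorm a p Sc z <= (r ^+ 2)%:E)%E -> (sqnorm a p Sc zb <= (r ^+ 2)%:E)%E ->
  (\sum_(j < n) XyM K s Sc Q z zb j <=
   (K%:R)%:E * (r%:E * ellnorm a p Sc (XzbM K s Sc Q z zb)
              + r%:E * ellnorm a p Sc (XzM K s Sc Q z zb)))%E.
Proof.
move=> ha hp hr hz hzb.
rewrite /XyM -esum_sum; last first.
  move=> t j _ _; rewrite lee_fin; apply: mulr_ge0; last exact: monabs_ge0.
  apply: mulr_ge0; last exact: monabs_ge0.
  by apply: mulr_ge0; [exact: normr_ge0 | exact: coefM_ge0].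
apply: ge_ereal_sup => _ [X [finX XI] <-].
rewrite fsbig_finite //=.
set ts := fset_set X.
have tsI : forall t, t \in ts -> Qidx R K Sc t.
  by move=> t; rewrite in_fset_set // => /set_mem /XI.
pose g := fun t : 'rV[int]_n * mindex d * mindex d =>
  Defs.coefM s Q t * monabs t.1.2 z * monabs t.2 zb.
have g0 t : 0 <= g t.
  by apply: mulr_ge0; [apply: mulr_ge0; [exact: coefM_ge0|exact: monabs_ge0]|exact: monabs_ge0].
set U := seq_fset tt (flatten [seq (enum_fset (finsupp t.1.2) ++ enum_fset (finsupp t.2)) | t <- ts]).
have Usub1 t : t \in ts -> (finsupp t.1.2 `<=` U)%fset.
  move=> tin; apply/fsubsetP => k kin; rewrite seq_fsetE; apply/flattenP.
  exists (enum_fset (finsupp t.1.2) ++ enum_fset (finsupp t.2)); first exact: map_f.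
  by rewrite mem_cat kin.
have Usub2 t : t \in ts -> (finsupp t.2 `<=` U)%fset.
  move=> tin; apply/fsubsetP => k kin; rewrite seq_fsetE; apply/flattenP.
  exists (enum_fset (finsupp t.1.2) ++ enum_fset (finsupp t.2)); first exact: map_f.
  by rewrite mem_cat kin orbT.
have USc k : k \in U -> Sc k.
  rewrite seq_fsetE => /flattenP [l /mapP [t tin ->]].
  have [_ [_ [h1 h2]]] := tsI t tin.
  by rewrite mem_cat => /orP [] kin; [apply: h1|apply: h2].
apply: (le_trans (_ : _ <= ((K%:R : R))%:E * (\sum_(t <- ts) g t)%:E)%E).
  under eq_bigr do rewrite sumEFin.
  rewrite sumEFin -EFinM lee_fin mulr_sumr big_seq [X in _ <= X]big_seq.
  apply: ler_sum => t tin.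
  rewrite (_ : \sum_(j < n) _ = l1norm R t.1.1 * g t); last first.
    by rewrite /g /l1norm !mulr_suml; apply: eq_bigr => j _; rewrite !mulrA.
  apply: ler_wpM2r => //; by have [] := tsI t tin.
apply: lee_wpmul2l; first by rewrite lee_fin.
apply: (@le_trans _ _ (\sum_(k <- U) (cmod (z k))%:E * XzbM K s Sc Q z zb k
     + \sum_(k <- U) (cmod (zb k))%:E * XzM K s Sc Q z zb k)%E); last first.
  apply: leeD.
    apply: (@cs_ext R d a p r Sc U (fun k => cmod (z k)) (XzbM K s Sc Q z zb)) => //.
      by move=> k; exact: cmod_ge0.
    move=> k; apply: esum_ge0 => t _; rewrite lee_fin; apply: mulr_ge0; last exact: monabs_ge0.
    by apply: mulr_ge0; [exact: coefM_ge0|exact: dmonabs_ge0].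
  apply: (@cs_ext R d a p r Sc U (fun k => cmod (zb k)) (XzM K s Sc Q z zb)) => //.
    by move=> k; exact: cmod_ge0.
  move=> k; apply: esum_ge0 => t _; rewrite lee_fin; apply: mulr_ge0; last exact: dmonabs_ge0.
  by apply: mulr_ge0; [exact: coefM_ge0|exact: monabs_ge0].
have key : forall t, t \in ts -> g t <=
    \sum_(k <- U) cmod (z k) * (Defs.coefM s Q t * dmonabs k t.1.2 z * monabs t.2 zb)
  + \sum_(k <- U) cmod (zb k) * (Defs.coefM s Q t * monabs t.1.2 z * dmonabs k t.2 zb).
  move=> t tin; have [_ [hdeg _]] := tsI t tin.
  rewrite (_ : \sum_(k <- U) cmod (z k) * _ =
     Defs.coefM s Q t * monabs t.2 zb * \sum_(k <- U) cmod (z k) * dmonabs k t.1.2 z); last first.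
    by rewrite mulr_sumr; apply: eq_bigr => k _; ring.
  rewrite (_ : \sum_(k <- U) cmod (zb k) * _ =
     Defs.coefM s Q t * monabs t.1.2 z * \sum_(k <- U) cmod (zb k) * dmonabs k t.2 zb); last first.
    by rewrite mulr_sumr; apply: eq_bigr => k _; ring.
  rewrite !euler; [|exact: Usub2|exact: Usub1].
  rewrite (_ : _ + _ = (mdeg t.1.2 + mdeg t.2)%:R * g t); last first.
    rewrite /g natrD; ring.
  by apply: ler_peMl => //; rewrite ler1n.
apply: (@le_trans _ _ ((\sum_(k <- U) cmod (z k) * \sum_(t <- ts)
        (Defs.coefM s Q t * dmonabs k t.1.2 z * monabs t.2 zb))%:E
  + (\sum_(k <- U) cmod (zb k) * \sum_(t <- ts)
        (Defs.coefM s Q t * monabs t.1.2 z * dmonabs k t.2 zb))%:E)%E).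
  rewrite -EFinD lee_fin.
  apply: le_trans (_ : \sum_(t <- ts) (\sum_(k <- U) cmod (z k) * (Defs.coefM s Q t * dmonabs k t.1.2 z * monabs t.2 zb)
  + \sum_(k <- U) cmod (zb k) * (Defs.coefM s Q t * monabs t.1.2 z * dmonabs k t.2 zb)) <= _).
    by rewrite big_seq [X in _ <= X]big_seq; apply: ler_sum.
  rewrite big_split /=; apply: lerD; rewrite exchange_big /=;
    by apply: ler_sum => k _; rewrite mulr_sumr lexx.
apply: leeD; rewrite -sumEFin; apply: lee_sum => k _; rewrite EFinM;
  (apply: lee_wpmul2l; first by rewrite lee_fin; exact: cmod_ge0);
  rewrite -sumEFin; apply: esum_ge; exists X => //; by rewrite fsbig_finite.
Qed.

Lemma esqrt_ge0 (R : realType) (x : \bar R) : (0 <= esqrt x)%E.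
Proof. by case: x => [x| |] //=; rewrite lee_fin sqrtr_ge0. Qed.

Theorem lemmaA6 (R : realType) (n d : nat) (a p s r : R) (K : nat)
    (Sc : set 'rV[int]_d)
    (Q : 'rV[int]_n -> mindex d -> mindex d -> R[i]) :
  (1 <= n)%N -> (1 <= d)%N -> 0 <= a -> 0 <= p -> 0 < s -> 0 < r ->
  (1 <= K)%N ->
  (@norm_Xy R n d K a p s r Sc Q <= (K%:R)%:E * @norm_Xw R n d K a p s r Sc Q)%E.
Proof.
move=> hn hd ha hp hs hr hK.
apply: ge_ereal_sup => _ [P HP <-].
have [_ [_ Hw]] := HP.
have sq0 (u : 'rV[int]_d -> R[i]) : (0 <= sqnorm a p Sc u)%E.
  apply: esum_ge0 => k _; rewrite lee_fin; apply: mulr_ge0.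
    exact: le_trans ler01 (@weight_ge1 R d a p k ha hp).
  exact: sqr_ge0.
have Hsum := @esqrt_le R _ r (adde_ge0 (sq0 _) (sq0 _)) (ltW hr) Hw.
have hz : (sqnorm a p Sc P.2.1 <= (r ^+ 2)%:E)%E.
  by apply: le_trans Hsum; apply: leeDl.
have hzb : (sqnorm a p Sc P.2.2 <= (r ^+ 2)%:E)%E.
  by apply: le_trans Hsum; apply: leeDr.
have HW : (Vnorm s r 0 0 (ellnorm a p Sc (XzM K s Sc Q P.2.1 P.2.2))
             (ellnorm a p Sc (XzbM K s Sc Q P.2.1 P.2.2))
           <= norm_Xw K a p s r Sc Q)%E.
  by apply: ereal_sup_ubound; exists P.
have K0 : (0 <= (K%:R : R)%:E)%E by rewrite lee_fin ler0n.
apply: le_trans (lee_wpmul2l K0 HW).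
rewrite /Vnorm !mul0e !add0e !adde0.
have PW := @pointwise R n d K a p s r Sc Q P.2.1 P.2.2 ha hp hr hz hzb.
have r2 : (0 <= (r ^- 2)%:E)%E by rewrite lee_fin invr_ge0 exprn_ge0 // ltW.
apply: le_trans (lee_wpmul2r r2 PW) _.
set N1 := ellnorm _ _ _ (XzbM _ _ _ _ _ _).
set N2 := ellnorm _ _ _ (XzM _ _ _ _ _ _).
have N10 : (0 <= N1)%E by exact: esqrt_ge0.
have N20 : (0 <= N2)%E by exact: esqrt_ge0.
have rr : r * r ^- 2 = r^-1.
  have r0 : r != 0 by rewrite gt_eqF.
  by rewrite expr2 invfM mulrA divff // mul1r.
have rN1 : (0 <= r%:E * N1)%E by apply: mule_ge0 => //; rewrite lee_fin ltW.
have rN2 : (0 <= r%:E * N2)%E by apply: mule_ge0 => //; rewrite lee_fin ltW.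
rewrite -muleA (ge0_muleDl _ rN1 rN2).
rewrite (muleC r%:E N1) (muleC r%:E N2) -!muleA -!EFinM rr addeC.
by [].
Qed.
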